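(* For any graph $\Gamma_1$ and any graph $\Gamma_2$ of order $n_2$ and maximum degree $\Delta_2$, and any integer $k$, $\gamma_{k-\Delta_2}^o(\Gamma_1\times\Gamma_2)\le n_2\,\gamma_k^o(\Gamma_1)$.
   Context: Graphs are finite and simple. In a graph $G=(V,E)$, for $S\subseteq V$ and $v\in V$, $\delta_S(v)$ is the number of neighbours of $v$ in $S$, $\overline{S}=V\setminus S$, and $\partial(S)$ the set of vertices of $\overline{S}$ with a neighbour in $S$. A nonempty $S$ is an offensive $k$-alliance in $G$ if $\delta_S(v)\ge\delta_{\overline{S}}(v)+k$ for every $v\in\partial(S)$, and a global offensive $k$-alliance if moreover it is dominating. $\gamma_k^o(G)$ is the minimum cardinality of a global offensive $k$-alliance in $G$. The Cartesian product $\Gamma_1\times\Gamma_2$ has vertex set $V_1\times V_2$, with $(u,v)\sim(u',v')$ iff either $u=u'$ and $v\sim v'$, or $v=v'$ and $u\sim u'$. *)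

(* Defs.v *)
From mathcomp Require Import all_boot all_order all_algebra.
Set Implicit Arguments. Unset Strict Implicit. Unset Printing Implicit Defensive.
Import Order.TTheory GRing.Theory Num.Theory.

Definition simple_graph (T : finType) (e : rel T) : Prop :=
  symmetric e /\ irreflexive e.

Section Alliances.
Variables (T : finType) (e : rel T).

Definition delta (S : {set T}) (v : T) : nat := #|[set w in S | e v w]|.

Definition boundary (S : {set T}) : {set T} :=
  [set v in ~: S | [exists w in S, e v w]].

Definition dominating (S : {set T}) : Prop :=
  forall v, v \notin S -> exists2 w, w \in S & e v w.

Definition offensive_alliance (k : int) (S : {set T}) : Prop :=
  S != set0 /\
  forall v, v \in boundary S ->
    ((delta S v)%:Z >= (delta (~: S) v)%:Z + k)%R.

Definition global_offensive_alliance (k : int) (S : {set T}) : Prop :=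
  offensive_alliance k S /\ dominating S.

Definition is_gamma_o (k : int) (g : nat) : Prop :=
  (exists S, global_offensive_alliance k S /\ #|S| = g) /\
  (forall S, global_offensive_alliance k S -> g <= #|S|).

Definition max_degree : nat := \max_(v : T) #|[set w | e v w]|.

End Alliances.

Definition cart_rel (T1 T2 : finType) (e1 : rel T1) (e2 : rel T2) :
  rel (T1 * T2) :=
  fun x y => ((x.1 == y.1) && e2 x.2 y.2) || ((x.2 == y.2) && e1 x.1 y.1).

(* Main.v *)
Require Import Defs.
From mathcomp Require Import all_boot all_order all_algebra.
From mathcomp Require Import zify.
From Stdlib Require Import Classical.
Import Order.TTheory GRing.Theory Num.Theory.

Lemma exists_min (T : finType) (P : {set T} -> Prop) (S : {set T}) :
  P S -> exists g, ((exists S, P S /\ #|S| = g) /\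
                    (forall S, P S -> g <= #|S|)) /\ g <= #|S|.
Proof.
move=> PS; have [n Hn] : exists n, #|S| <= n by exists #|S|.
elim: n S PS Hn => [|n IH] S PS Hn.
  exists #|S|; split => //; split; first by exists S.
  by move=> S' _; move: Hn; rewrite leqn0 => /eqP ->.
destruct (classic (exists S', P S' /\ #|S'| < #|S|)) as [[S' [PS' lt]]|nex].
  have [g [H1 H2]] := IH S' PS' (ltnSE (leq_trans lt Hn)).
  exists g; split => //; exact: leq_trans H2 (ltnW lt).
exists #|S|; split => //; split; first by exists S.
move=> S' PS'; rewrite leqNgt; apply/negP => lt; apply: nex; by exists S'.
Qed.

Theorem mainTheorem14 (T1 T2 : finType) (e1 : rel T1) (e2 : rel T2)
  (G1 : simple_graph e1) (G2 : simple_graph e2) (T2ne : 0 < #|T2|)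
  (k : int) (g1 : nat) :
  is_gamma_o e1 k g1 ->
  exists g, is_gamma_o (cart_rel e1 e2) (k - (max_degree e2)%:Z)%R g /\
            g <= #|T2| * g1.
Proof.
move=> [[S [[[S0 Off] Dom] cS]] _].
have [irr1 _] : irreflexive e1 /\ True by case: G1.
set S' := setX S [set: T2].
have inS' : forall x : T1 * T2, (x \in S') = (x.1 \in S).
  by move=> [x1 x2]; rewrite /S' in_setX in_setT andbT.
suff GA : global_offensive_alliance (cart_rel e1 e2) (k - (max_degree e2)%:Z)%R S'.
  have [g [H1 H2]] := @exists_min _ (global_offensive_alliance (cart_rel e1 e2) (k - (max_degree e2)%:Z)%R) _ GA.
  exists g; split => //; move: H2; rewrite /S' cardsX cardsT cS mulnC //.
split; last first.
  move=> [a b]; rewrite inS' /= => aS.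
  have [w wS ew] := Dom a aS.
  exists (w, b); first by rewrite inS'.
  by rewrite /cart_rel /= eqxx ew orbT.
split.
  case/set0Pn: S0 => a aS.
  case/card_gt0P: T2ne => b _.
  apply/set0Pn; exists (a, b); by rewrite inS'.
move=> [a b]; rewrite inE => /andP [].
rewrite in_setC inS' /= => aS /existsP [[w1 w2]] /andP [].
rewrite inS' /= => w1S.
rewrite /cart_rel /= => /orP [/andP [/eqP ea _]|/andP [/eqP eb ew]].
  by subst w1; rewrite w1S in aS.
have aB : a \in boundary e1 S.
  by rewrite inE in_setC aS /=; apply/existsP; exists w1; rewrite w1S.
have := Off a aB.
have L1 : delta e1 S a <= delta (cart_rel e1 e2) S' (a, b).
  rewrite /delta.
  have -> : [set w in S | e1 a w] = [set w | (w, b) \in [set w in S' | cart_rel e1 e2 (a, b) w]].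
    apply/setP => w; rewrite !inE andbT /cart_rel /= eqxx /=.
    case: (a =P w) => [<-|_]; by rewrite ?irr1 ?(negbTE aS) ?andbF.
  have inj : injective (fun w : T1 => (w, b)) by move=> x y [].
  rewrite -(card_imset _ inj).
  apply: subset_leq_card; apply/subsetP => x /imsetP [w]; by rewrite inE => ? ->.
have L2 : delta (cart_rel e1 e2) (~: S') (a, b) <= delta e1 (~: S) a + max_degree e2.
  rewrite /delta.
  apply: (leq_trans (n := #|(fun w => (w, b)) @: [set w in ~: S | e1 a w] :|: (fun c => (a, c)) @: [set c | e2 b c]|)).
    apply: subset_leq_card; apply/subsetP => [[x1 x2]].
    rewrite !inE andbT /cart_rel /= => /andP [nx /orP [/andP [/eqP <- ex]|/andP [/eqP <- ex]]].
      apply/orP; right; apply/imsetP; exists x2 => //; by rewrite inE.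
    apply/orP; left; apply/imsetP; exists x1 => //; by rewrite !inE nx.
  apply: leq_trans (leq_card_setU _ _) _.
  apply: leq_add; first exact: leq_imset_card.
  apply: leq_trans (leq_imset_card _ _) _.
  rewrite /max_degree.
  exact: (@leq_bigmax _ (fun v => #|[set w | e2 v w]|) b).
move: L1 L2; set x := delta _ _ _; set y := delta _ _ _; set z := delta _ _ _; set t := delta _ _ _.
move=> L1 L2 H.
clearbody x y z t; move: (max_degree e2) L2 => m L2.
clear -L1 L2 H. lia.
Qed.
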